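(* Let $X$ be a connected weighted non-bipartite graph with vertex $u$ such that $0\in\Phi_{\mathbf e_u}(X)$. If $(E_0)_{u,u}>\frac12$, then $u$ is sedentary in $X$ and both copies $(0,u)$ and $(1,u)$ of $u$ are sedentary in $K_2\times X$. If $(E_0)_{u,u}=\frac12$, then $u$ is sedentary in $X$ if and only if its two copies $(0,u),(1,u)$ are sedentary in $K_2\times X$.
   Context: Graphs are simple, connected, undirected, with nonzero real edge weights; $A(X)$ is the weighted adjacency matrix with spectral decomposition $A(X)=\sum_\lambda\lambda E_\lambda$ over distinct eigenvalues, $E_\lambda$ the orthogonal projection onto the $\lambda$-eigenspace; $\Phi_{\mathbf e_u}(X)=\{\lambda:E_\lambda\mathbf e_u\ne0\}$. The bipartite double $K_2\times X$ is the weighted graph with vertex set $\{0,1\}\times V(X)$ and adjacency matrix $A(K_2)\otimes A(X)$; $(0,u),(1,u)$ are the two copies of $u$ (it is connected since $X$ is non-bipartite). With $U(t)=e^{itA}$, a vertex $u$ is sedentary if $\inf_{t>0}|U(t)_{u,u}|\ge C$ for some $0<C\le1$. *)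

(* Defs.v *)
From HB Require Import structures.
From mathcomp Require Import all_boot all_order all_algebra.
From mathcomp Require Import all_classical all_reals all_analysis.
From mathcomp Require Import complex mxtens.
Set Implicit Arguments. Unset Strict Implicit. Unset Printing Implicit Defensive.
Import Order.TTheory GRing.Theory Num.Theory.
Import numFieldNormedType.Exports.
Local Open Scope ring_scope.
Local Open Scope complex_scope.

Section Defs.
Variable R : realType.

Definition adjrel n (A : 'M[R]_n) : rel 'I_n := fun x y => A x y != 0.

Definition weighted_graph n (A : 'M[R]_n) : Prop :=
  A^T = A /\ forall i, A i i = 0.

Definition connected_graph n (A : 'M[R]_n) : Prop :=
  forall i j, connect (adjrel A) i j.

Definition bipartite_graph n (A : 'M[R]_n) : Prop :=
  exists f : 'I_n -> bool, forall i j, adjrel A i j -> f i != f j.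

(* E_lambda : orthogonal projection onto the lambda-eigenspace of A
   (B^T (B B^T)^-1 B, with the rows of B a basis of the eigenspace). *)
Definition eigenproj n (A : 'M[R]_n) (l : R) : 'M[R]_n :=
  let B := row_base (eigenspace A l) in B^T *m invmx (B *m B^T) *m B.

Definition evec n (u : 'I_n) : 'cV[R]_n := delta_mx u 0.

Definition eigsupport n (A : 'M[R]_n) (u : 'I_n) : pred R :=
  fun l => eigenproj A l *m evec u != 0.

Definition seqlim (v : nat -> R) : R := limn v.

Definition expm_partial n (A : 'M[R]_n) (t : R) (N : nat) : 'M[complex R]_n :=
  \sum_(k < N) ((('i * t%:C) ^+ k) / (k`!)%:R) *: map_mx (fun x => x%:C) (A ^+ k).

Definition transfer n (A : 'M[R]_n) (t : R) : 'M[complex R]_n :=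
  \matrix_(i, j) ((seqlim (fun N => complex.Re (expm_partial A t N i j)))
                  +i* (seqlim (fun N => complex.Im (expm_partial A t N i j)))).

Definition sedentary n (A : 'M[R]_n) (u : 'I_n) : Prop :=
  exists C : R, 0 < C <= 1 /\ forall t : R, 0 < t -> C%:C <= `|transfer A t u u|.

Definition adjK2 : 'M[R]_2 := \matrix_(i, j) (i != j)%:R.

Definition bipdouble n (A : 'M[R]_n) : 'M[R]_(2 * n) := adjK2 *t A.

Definition copy n (a : 'I_2) (u : 'I_n) : 'I_(2 * n) := mxtens_index (a, u).

End Defs.

(* Main.v *)
Require Import Defs.
From HB Require Import structures.
From mathcomp Require Import all_boot all_order all_algebra.
From mathcomp Require Import all_classical all_reals all_analysis.
From mathcomp Require Import complex mxtens.
From mathcomp Require Import spectral sesquilinear ring lra.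
Import Order.TTheory GRing.Theory Num.Theory.
Local Open Scope ring_scope.

Section Ana.
Import numFieldNormedType.Exports.
Local Open Scope complex_scope.
Local Open Scope classical_set_scope.
Variable R : realType.

Lemma i_pow (k : nat) : ('i : R[i]) ^+ k =
  ((~~ odd k)%:R * (-1) ^+ k./2) +i* ((odd k)%:R * (-1) ^+ k.-1./2).
Proof.
rewrite -(odd_double_half k); move: (odd k) (k./2) => b m.
rewrite half_bit_double oddD odd_double addbF.
rewrite exprD -mul2n exprM sqr_i.
rewrite -[(-1 : R[i])](rmorphN1 (real_complex R)) -rmorphXn.
case: b => /=.
- rewrite mul2n doubleK expr1 mul0r mul1r; by simpc.
- by rewrite expr0 !mul1r mul0r.
Qed.

Lemma term_eq (t x : R) (k : nat) :
  (('i * t%:C) ^+ k / (k`!)%:R) * x%:C = 'i ^+ k * (t ^+ k / (k`!)%:R * x)%:C.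
Proof.
rewrite exprMn !rmorphM /= fmorphV /= rmorphXn /= rmorph_nat.
by rewrite !mulrA.
Qed.

Lemma Re_iterm k (y : R) : complex.Re ('i ^+ k * y%:C) = (~~ odd k)%:R * (-1) ^+ k./2 * y.
Proof. by rewrite i_pow /= mulr0 subr0. Qed.

Lemma Im_iterm k (y : R) : complex.Im ('i ^+ k * y%:C) = (odd k)%:R * (-1) ^+ k.-1./2 * y.
Proof. by rewrite i_pow /= mulr0 add0r. Qed.


Lemma partial_entry n (A : 'M[R]_n) t N u v :
  expm_partial A t N u v =
  \sum_(k < N) 'i ^+ k * (t ^+ k / (k`!)%:R * (A ^+ k) u v)%:C.
Proof.
rewrite /expm_partial summxE; apply: eq_bigr => k _.
by rewrite !mxE term_eq.
Qed.

Lemma cvg_cos_ser x : series (cos_coeff x) @ \oo --> (cos x : R).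
Proof. rewrite unlock; exact: is_cvg_series_cos_coeff. Qed.

Lemma cvg_sin_ser x : series (sin_coeff x) @ \oo --> (sin x : R).
Proof. rewrite unlock; exact: is_cvg_series_sin_coeff. Qed.

Lemma cvg_cos_part (I : finType) (w r : I -> R) t :
  (fun N => \sum_(k < N) (~~ odd k)%:R * (-1) ^+ k./2 *
      (t ^+ k / (k`!)%:R * \sum_j w j * r j ^+ k)) @ \oo -->
  \sum_j w j * cos (t * r j).
Proof.
have -> : (fun N => \sum_(k < N) (~~ odd k)%:R * (-1) ^+ k./2 *
      (t ^+ k / (k`!)%:R * \sum_j w j * r j ^+ k)) =
   (fun N => \sum_j w j * series (cos_coeff (t * r j)) N).
  apply/funext => N.
  under eq_bigr do rewrite !mulr_sumr.
  rewrite exchange_big /=; apply: eq_bigr => j _.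
  rewrite /series /= big_mkord mulr_sumr; apply: eq_bigr => k _.
  rewrite /cos_coeff /= exprMn -exprnP; ring.
apply: cvg_big.
- exact: add_continuous.
- move=> j _; apply: cvgMr; exact: cvg_cos_ser.
Qed.


Lemma cvg_sin_part (I : finType) (w r : I -> R) t :
  (fun N => \sum_(k < N) (odd k)%:R * (-1) ^+ k.-1./2 *
      (t ^+ k / (k`!)%:R * \sum_j w j * r j ^+ k)) @ \oo -->
  \sum_j w j * sin (t * r j).
Proof.
have -> : (fun N => \sum_(k < N) (odd k)%:R * (-1) ^+ k.-1./2 *
      (t ^+ k / (k`!)%:R * \sum_j w j * r j ^+ k)) =
   (fun N => \sum_j w j * series (sin_coeff (t * r j)) N).
  apply/funext => N.
  under eq_bigr do rewrite !mulr_sumr.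
  rewrite exchange_big /=; apply: eq_bigr => j _.
  rewrite /series /= big_mkord mulr_sumr; apply: eq_bigr => k _.
  rewrite /sin_coeff /= exprMn; ring.
apply: cvg_big.
- exact: add_continuous.
- move=> j _; apply: cvgMr; exact: cvg_sin_ser.
Qed.

Lemma transfer_spec n (A : 'M[R]_n) u (w r : 'I_n -> R) :
  (forall k, (A ^+ k) u u = \sum_j w j * r j ^+ k) ->
  forall t, transfer A t u u =
    (\sum_j w j * cos (t * r j)) +i* (\sum_j w j * sin (t * r j)).
Proof.
move=> Hm t; rewrite /transfer mxE /seqlim; congr (_ +i* _).
- apply: cvg_lim => //.
  have -> : (fun N => complex.Re (expm_partial A t N u u)) =
    (fun N => \sum_(k < N) (~~ odd k)%:R * (-1) ^+ k./2 *
      (t ^+ k / (k`!)%:R * \sum_j w j * r j ^+ k)).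
    apply/funext => N; rewrite partial_entry raddf_sum /=.
    by apply: eq_bigr => k _; rewrite Re_iterm Hm.
  exact: cvg_cos_part.
- apply: cvg_lim => //.
  have -> : (fun N => complex.Im (expm_partial A t N u u)) =
    (fun N => \sum_(k < N) (odd k)%:R * (-1) ^+ k.-1./2 *
      (t ^+ k / (k`!)%:R * \sum_j w j * r j ^+ k)).
    apply/funext => N; rewrite partial_entry raddf_sum /=.
    by apply: eq_bigr => k _; rewrite Im_iterm Hm.
  exact: cvg_sin_part.
Qed.


Lemma adjK2_sqr : adjK2 R *m adjK2 R = 1%:M.
Proof.
apply/matrixP => i j; rewrite !mxE !big_ord_recl big_ord0 !mxE.
case: i => [[|[|?]] ?] //; case: j => [[|[|?]] ?] //=; rewrite ?mul0r ?mulr0 ?mul1r ?add0r ?addr0.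
all: by rewrite /= ?mulr1n ?mulr0n.
Qed.

Lemma adjK2_pow k : adjK2 R ^+ k = if odd k then adjK2 R else 1.
Proof.
elim: k => [|k IH]; first by rewrite expr0.
rewrite exprS IH /=; case: (odd k) => /=.
- exact: adjK2_sqr.
- by rewrite mulr1.
Qed.

Lemma tens11 n : (1 : 'M[R]_2) *t (1 : 'M[R]_n) = 1.
Proof.
apply/matrixP => i j.
rewrite -(mxtens_unindexK i) -(mxtens_unindexK j).
case: (mxtens_unindex i) => a b; case: (mxtens_unindex j) => c d.
rewrite tensmxE !mxE (can_eq (@mxtens_indexK _ _)) xpair_eqE.
by case: (a == c); case: (b == d); rewrite ?mulr1 ?mul1r ?mulr0 ?mul0r.
Qed.

Lemma double_pow n (A : 'M[R]_n) k : bipdouble A ^+ k = adjK2 R ^+ k *t A ^+ k.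
Proof.
elim: k => [|k IH]; first by rewrite !expr0 tens11.
by rewrite !exprS IH /bipdouble -tensmx_mul.
Qed.

Lemma double_entry n (A : 'M[R]_n) k a u :
  (bipdouble A ^+ k) (copy a u) (copy a u) = (~~ odd k)%:R * (A ^+ k) u u.
Proof.
rewrite double_pow /copy tensmxE adjK2_pow.
by case: (odd k); rewrite /= ?mxE ?eqxx.
Qed.

Lemma transfer_double n (A : 'M[R]_n) u (w r : 'I_n -> R) a :
  (forall k, (A ^+ k) u u = \sum_j w j * r j ^+ k) ->
  forall t, transfer (bipdouble A) t (copy a u) (copy a u) =
    (\sum_j w j * cos (t * r j)) +i* 0.
Proof.
move=> Hm t; rewrite /transfer mxE /seqlim; congr (_ +i* _).
- apply: cvg_lim => //.
  have -> : (fun N => complex.Re (expm_partial (bipdouble A) t N (copy a u) (copy a u))) =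
    (fun N => \sum_(k < N) (~~ odd k)%:R * (-1) ^+ k./2 *
      (t ^+ k / (k`!)%:R * \sum_j w j * r j ^+ k)).
    apply/funext => N; rewrite partial_entry raddf_sum /=.
    apply: eq_bigr => k _; rewrite Re_iterm double_entry Hm.
    by case: (odd k); rewrite /= ?mul0r ?mulr0 ?mul1r.
  exact: cvg_cos_part.
- apply: cvg_lim => //.
  have -> : (fun N => complex.Im (expm_partial (bipdouble A) t N (copy a u) (copy a u))) =
    (fun N => 0).
    apply/funext => N; rewrite partial_entry raddf_sum /=.
    apply: big1 => k _; rewrite Im_iterm double_entry.
    by case: (odd k); rewrite /= ?mul0r ?mulr0 ?mul1r.
  exact: cvg_cst.
Qed.

End Ana.

Section Spec.
Local Open Scope complex_scope.
Variable R : realType.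
Local Notation rc := (real_complex R).

Lemma mxtr_eq0 m n (X : 'M[R]_(m,n)) : X *m X^T = 0 -> X = 0.
Proof.
move=> H; apply/matrixP => i j; rewrite mxE.
have /matrixP/(_ i i) := H; rewrite !mxE => Hs.
have H0 : forall l : 'I_n, xpredT l -> 0 <= X i l * X^T l i.
  by move=> l _; rewrite mxE -expr2 sqr_ge0.
have := @psumr_eq0P R _ xpredT (fun l => X i l * X^T l i) H0 Hs j isT.
by rewrite mxE => /eqP; rewrite mulf_eq0 orbb => /eqP.
Qed.

Lemma BBt_unit m n (B : 'M[R]_(m,n)) : row_free B -> B *m B^T \in unitmx.
Proof.
move=> fB; rewrite -row_free_unit -kermx_eq0; apply/eqP.
set K := kermx _.
have HK : K *m B = 0.
  apply: mxtr_eq0; rewrite trmx_mul mulmxA -(mulmxA K) mulmx_ker mul0mx //.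
by apply/eqP; rewrite -(mulmx_free_eq0 _ fB) HK.
Qed.


Lemma fix_gen (F K : fieldType) (f : {rmorphism F -> K}) m n
  (B : 'M[F]_(m,n)) (q : 'rV[K]_n) : B *m B^T \in unitmx ->
  (q <= map_mx f B)%MS -> q *m map_mx f (B^T *m invmx (B *m B^T) *m B) = q.
Proof.
move=> hU /submxP [y ->].
rewrite !map_mxM map_invmx map_mxM -map_trmx.
have hUc : map_mx f B *m (map_mx f B)^T \in unitmx.
  by rewrite map_trmx -map_mxM map_unitmx.
rewrite -!mulmxA; congr (_ *m _).
by rewrite !mulmxA (mulmxV hUc) mul1mx.
Qed.

Lemma spec_decomp n (A : 'M[R]_n) (u : 'I_n) : A^T = A ->
  exists w r : 'I_n -> R, (forall j, 0 <= w j) /\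
   (forall k, (A ^+ k) u u = \sum_j w j * r j ^+ k) /\
   eigenproj A 0 u u = \sum_(j | r j == 0) w j.
Proof.
move=> symA.
pose AC := map_mx rc A.
have hAC : AC \is hermsymmx.
  apply: realsym_hermsym.
  - apply/is_hermitianmxP; rewrite expr0 scale1r map_mx_id // /AC map_trmx symA.
    done.
  - by apply/mxOverP => i j; rewrite mxE complex_real.
have /orthomx_spectralP eA := hermitian_normalmx hAC.
move: eA; set Q := spectralmx AC; set d := spectral_diag AC => eA.
have Qu : Q \is unitarymx := spectral_unitarymx AC.
have QU : Q \in unitmx := spectral_unit AC.
have dreal : d \is a realmx := hermitian_spectral_diag_real hAC.
clearbody Q d.
pose r j := complex.Re (d 0 j).
have dr j : d 0 j = (r j)%:C by rewrite /r RRe_real //; exact: (mxOverP dreal).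
pose w j := complex.Re ((Q j u)^* * Q j u).
have wC j : (w j)%:C = (Q j u)^* * Q j u.
  by rewrite /w RRe_real //; apply: ger0_real; rewrite mulrC mul_conjC_ge0.
have Qi : invmx Q = (Q ^t*)%sesqui by rewrite invmx_unitary.
exists w, r; split; [|split].
- by move=> j; rewrite -lecR rmorph0 wC mulrC mul_conjC_ge0.
-   have powA k : AC ^+ k = invmx Q *m diag_mx (\row_j (r j ^+ k)%:C) *m Q.
    elim: k => [|k IH].
      rewrite expr0 (_ : diag_mx _ = 1%:M); last first.
        by apply/matrixP => i j; rewrite !mxE expr0 rmorph1.
      by rewrite mulmx1 mulVmx.
    rewrite exprS IH -mulmxE.
    rewrite [X in X *m _]eA.
    rewrite !mulmxA -(mulmxA (invmx Q *m diag_mx d) Q (invmx Q)) (mulmxV QU) mulmx1.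
    rewrite -(mulmxA (invmx Q) (diag_mx d)) mulmx_diag.
    do 2 f_equal; f_equal; apply/rowP => j.
    by rewrite !mxE dr -rmorphM exprS.
  have mapP k : map_mx rc (A ^+ k) = AC ^+ k.
    elim: k => [|k IH]; first by rewrite !expr0 map_mx1.
    by rewrite !exprS -!mulmxE map_mxM IH.
  move=> k; apply: complexI.
  have -> : ((A ^+ k) u u)%:C = map_mx rc (A ^+ k) u u by rewrite mxE.
  rewrite mapP powA Qi rmorph_sum /= mxE; apply: eq_bigr => j _.
  rewrite mul_mx_diag !mxE rmorphM /= wC rmorphXn.
  by rewrite mulrAC mulrC !mulrA.
- pose E := eigenspace A 0.
  pose B := row_base E.
  have EA : E = kermx A.
    by rewrite /E /eigenspace (_ : 0%:M = 0) ?subr0 //; apply/matrixP => i j; rewrite !mxE mul0rn.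
  have hBA : B *m A = 0.
    apply/sub_kermxP; rewrite -EA /B eq_row_base; exact: submx_refl.
  have hU : B *m B^T \in unitmx := @BBt_unit _ _ B (row_base_free E).
  have Pdef : eigenproj A 0 = B^T *m invmx (B *m B^T) *m B by [].
  have BE : (B :=: E)%MS := eq_row_base E.
  clearbody B.
  have PA : eigenproj A 0 *m A = 0.
    by rewrite Pdef -!mulmxA hBA !mulmx0.
  have Psym : (eigenproj A 0)^T = eigenproj A 0.
    by rewrite Pdef !trmx_mul trmxK trmx_inv trmx_mul trmxK mulmxA.
  have AP : A *m eigenproj A 0 = 0.
    by have := congr1 trmx PA; rewrite trmx_mul Psym symA trmx0.
  move: Psym AP Pdef; set P := eigenproj A 0 => Psym AP Pdef.
  clearbody P.
  pose PC := map_mx rc P.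
  have ACPC : AC *m PC = 0 by rewrite /AC /PC -map_mxM AP map_mx0.
  have fixq : forall q : 'rV[R[i]]_n, q *m AC = 0 -> q *m PC = q.
    move=> q /sub_kermxP; rewrite /AC -map_kermx -EA.
    have BEc : (map_mx rc B :=: map_mx rc E)%MS := (map_eqmx _ _ _).2 BE.
    rewrite -BEc => hq.
    rewrite /PC Pdef; exact: fix_gen.
  have QA : Q *m AC = diag_mx d *m Q.
    by rewrite {1}eA !mulmxA (mulmxV QU) mul1mx.
  have Qrow j : row j Q *m AC = d 0 j *: row j Q.
    rewrite -row_mul QA mul_diag_mx; apply/rowP => v; rewrite !mxE.
    done.
  have rowZ j : row j Q *m PC = ((r j == 0)%:R : R[i]) *: row j Q.
    have [rj0|rjn0] := eqVneq (r j) 0.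
    - rewrite scale1r; apply: fixq.
      by rewrite Qrow dr rj0 rmorph0 scale0r.
    - rewrite scale0r.
      have H : d 0 j *: (row j Q *m PC) = 0.
        by rewrite scalemxAl -Qrow -mulmxA ACPC mulmx0.
      move/eqP: H; rewrite scaler_eq0 => /orP [|/eqP //].
      by rewrite dr => /eqP [] /eqP; rewrite (negbTE rjn0).
  have QPC : Q *m PC = diag_mx (\row_j ((r j == 0)%:R : R[i])) *m Q.
    apply/matrixP => j v.
    have E1 : (Q *m PC) j v = (row j Q *m PC) 0 v.
      by rewrite -row_mul [RHS]mxE.
    rewrite E1 rowZ mul_diag_mx !mxE.
    done.
  have PCdef : PC = invmx Q *m diag_mx (\row_j ((r j == 0)%:R : R[i])) *m Q.
    by rewrite -mulmxA -QPC mulKmx.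
  apply: complexI.
  have -> : (P u u)%:C = PC u u.
    by rewrite /PC mxE.
  rewrite PCdef Qi mxE rmorph_sum [RHS]big_mkcond /=; apply: eq_bigr => j _.
  rewrite mul_mx_diag !mxE.
  case: (r j == 0) => /=.
  - by rewrite mulr1 wC.
  - by rewrite mulr0 mul0r.
Qed.

End Spec.

Section Real.
Variable R : realType.
Variable I : finType.
Variables (w r : I -> R).
Hypothesis w0 : forall j, 0 <= w j.
Hypothesis sw : \sum_j w j = 1.

Lemma jensen (x : I -> R) : (\sum_j w j * x j) ^+ 2 <= \sum_j w j * x j ^+ 2.
Proof.
set m := \sum_j w j * x j.
have H : 0 <= \sum_j w j * (x j - m) ^+ 2.
  by apply: sumr_ge0 => j _; apply: mulr_ge0 => //; exact: sqr_ge0.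
have E : \sum_j w j * (x j - m) ^+ 2 =
   \sum_j (w j * x j ^+ 2 - 2 * m * (w j * x j) + m ^+ 2 * w j).
  by apply: eq_bigr => j _; ring.
move: H; rewrite E big_split sumrB /= -!mulr_sumr -/m sw => H; nra.
Qed.

Let p := \sum_(j | r j == 0) w j.

Lemma p_ind : p = \sum_j (if r j == 0 then w j else 0).
Proof. by rewrite /p big_mkcond. Qed.

Lemma f_lb t : 2 * p - 1 <= \sum_j w j * cos (t * r j).
Proof.
have -> : 2 * p - 1 = \sum_j (2 * (if r j == 0 then w j else 0) - w j).
  by rewrite sumrB -mulr_sumr -p_ind sw.
apply: ler_sum => j _; have := w0 j; have := cos_geN1 (t * r j).
by case: eqP => [->|_]; rewrite ?mulr0 ?cos0 => *; nra.
Qed.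

Lemma f_ub t : \sum_j w j * cos (t * r j) <= 1.
Proof.
rewrite -sw; apply: ler_sum => j _; have := w0 j; have := cos_le1 (t * r j).
move=> *; nra.
Qed.

Lemma g_sq t : (\sum_j w j * sin (t * r j)) ^+ 2 <=
   2 + 2 * (\sum_j w j * cos (t * r j)) - 4 * p.
Proof.
apply: le_trans (jensen _) _.
have -> : 2 + 2 * (\sum_j w j * cos (t * r j)) - 4 * p =
  \sum_j (2 * w j + 2 * (w j * cos (t * r j)) - 4 * (if r j == 0 then w j else 0)).
  by rewrite p_ind !sumrB big_split /= -!mulr_sumr sw mulr1.
apply: ler_sum => j _.
case: eqP => [->|_] /=.
  by rewrite mulr0 cos0 sin0 expr0n /= mulr0 mulr1; lra.
have H1 := w0 j; have H2 := cos2Dsin2 (t * r j).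
have H3 : 0 <= w j * (1 + cos (t * r j)) ^+ 2 by apply: mulr_ge0 => //; exact: sqr_ge0.
move: H1 H2 H3; set c := cos _; set s := sin _ => H1 H2 H3.
have -> : s ^+ 2 = 1 - c ^+ 2 by rewrite -H2; ring.
nra.
Qed.

End Real.

Theorem theorem27 (R : realType) (n : nat) (A : 'M[R]_n) (u : 'I_n) :
  weighted_graph A -> connected_graph A -> ~ bipartite_graph A ->
  eigsupport A u 0 ->
  (1 / 2 < eigenproj A 0 u u ->
     sedentary A u /\ sedentary (bipdouble A) (copy 0 u)
                   /\ sedentary (bipdouble A) (copy 1 u)) /\
  (eigenproj A 0 u u = 1 / 2 ->
     (sedentary A u <->
        sedentary (bipdouble A) (copy 0 u) /\ sedentary (bipdouble A) (copy 1 u))).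
Proof.
move=> [symA _] _ _ _.
have [w [r [w0 [Hm Hp]]]] := @spec_decomp R n A u symA.
have sw : \sum_j w j = 1.
  have := Hm 0%N; under eq_bigr do rewrite expr0 mulr1.
  by rewrite expr0 mxE eqxx => <-.
pose f t := \sum_j w j * cos (t * r j).
pose g t := \sum_j w j * sin (t * r j).
have HX : sedentary A u <-> exists C : R, (0 < C <= 1) /\
    forall t, 0 < t -> C <= Num.sqrt (f t ^+ 2 + g t ^+ 2).
  rewrite /sedentary; split => -[C [HC H]]; exists C; split => // t /H;
  by rewrite (@transfer_spec R n A u w r Hm) normc_def lecR.
have HD a : sedentary (bipdouble A) (copy a u) <-> exists C : R, (0 < C <= 1) /\
    forall t, 0 < t -> C <= `|f t|.
  rewrite /sedentary; split => -[C [HC H]]; exists C; split => // t /H;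
  by rewrite (@transfer_double R n A u w r a Hm) normc_def lecR /= expr0n /= addr0 sqrtr_sqr.
have flb t := @f_lb R _ w r w0 sw t.
have fub t := @f_ub R _ w r w0 sw t.
have gsq t := @g_sq R _ w r w0 sw t.
rewrite Hp.
set pp := \sum_(j | r j == 0) w j in flb gsq *.
have sq t : f t <= Num.sqrt (f t ^+ 2 + g t ^+ 2).
  have s0 := sqrtr_ge0 (f t ^+ 2 + g t ^+ 2).
  have s2 : Num.sqrt (f t ^+ 2 + g t ^+ 2) ^+ 2 = f t ^+ 2 + g t ^+ 2.
    by rewrite sqr_sqrtr // addr_ge0 // sqr_ge0.
  have := sqr_ge0 (g t); nra.
split.
- move=> Hgt.
  have pp1 : pp <= 1 by have := flb 0; have := fub 0; rewrite /f; lra.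
  have key : forall t, 2 * pp - 1 <= f t by move=> t; exact: flb.
  split; [|split]; [apply/HX|apply/HD|apply/HD]; exists (2 * pp - 1);
    (split; [lra|move=> t _]).
  + exact: le_trans (key t) (sq t).
  + exact: le_trans (key t) (ler_norm _).
  + exact: le_trans (key t) (ler_norm _).
- move=> Hh; split.
  + move=> /HX [C [/andP [C0 C1] H]].
    have Hd : exists C0 : R, (0 < C0 <= 1) /\ forall t, 0 < t -> C0 <= `|f t|.
      exists (C ^+ 2 / 3); split; first by apply/andP; split; nra.
      move=> t /H Ht.
      have f0 : 0 <= f t by have := flb t; rewrite /f Hh; lra.
      have f1 := fub t.
      have g2 := gsq t.
      rewrite ger0_norm //.
      have s0 := sqrtr_ge0 (f t ^+ 2 + g t ^+ 2).
      have s2 : Num.sqrt (f t ^+ 2 + g t ^+ 2) ^+ 2 = f t ^+ 2 + g t ^+ 2.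
        by rewrite sqr_sqrtr // addr_ge0 // sqr_ge0.
      move: Ht s0 s2 f0 f1 g2; rewrite -/(f t) -/(g t) Hh.
      set s := Num.sqrt _; set F := f t; set G := g t => *.
      nra.
    by split; apply/HD; exact: Hd.
  + move=> [/HD [C [HC H]] _]; apply/HX; exists C; split => // t /H Ht.
    apply: le_trans Ht _.
    have s0 := sqrtr_ge0 (f t ^+ 2 + g t ^+ 2).
    have s2 : Num.sqrt (f t ^+ 2 + g t ^+ 2) ^+ 2 = f t ^+ 2 + g t ^+ 2.
      by rewrite sqr_sqrtr // addr_ge0 // sqr_ge0.
    have n2 : `|f t| ^+ 2 = f t ^+ 2 by rewrite real_normK // num_real.
    have n0 := normr_ge0 (f t).
    have := sqr_ge0 (g t); nra.
Qed.
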